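(* Let $G=(V,E)$ be a transient, connected, simple, locally finite graph with fixed vertex $o$ and fixed rotor mechanism $(m_x)_{x\in V}$. If $\rho_{\min}$ is a rotor configuration such that $w(\rho_{\min}(x))\le w(x,y)$ for every $x\in V$ and every outgoing edge $(x,y)$ of $x$, then for any $n\geq1$ and any $t\geq n$, \[ \frac{I_t(\rho_{\min},n)}{n}\geq \alpha_G. \]
   Context: For $x\in V$, $\mathcal{E}_x$ is the set of outgoing directed edges $(x,y)$ with $y$ a neighbor of $x$, and $\deg(x)=|\mathcal{E}_x|$. A rotor mechanism is a choice, for each $x$, of a bijection $m_x:\mathcal{E}_x\to\mathcal{E}_x$ with exactly one orbit. A rotor configuration is a map $\rho$ with $\rho(x)\in\mathcal{E}_x$ for each $x$. $\mathcal{G}(x)$ is the expected number of visits to $x$ by simple random walk on $G$ started at $o$; $\alpha_G$ is the probability that simple random walk started at $o$ never returns to $o$. Weight of a directed edge $(x,y)$: writing $(x,y_i):=m_x^i(x,y)$, \[ w(x,y):=\frac{-1}{\deg(x)}\sum_{i=0}^{\deg(x)-1} i\,\frac{\mathcal{G}(y_{i+1})}{\deg(y_{i+1})}. \] Experiment: given an initial rotor configuration $\rho$ and $n\ge1$, define $X_t^{(0)},\dots,X_t^{(n-1)}$ and $\rho_t$ ($t\ge0$) by: $X_0^{(i)}=o$ for all $i$, $\rho_0=\rho$. Let $i_t:=t+1\bmod n$. Particle $i$ has returned to $o$ by time $t$ if $X_t^{(i)}=o$ and $X_s^{(i)}\ne o$ for some $s<t$. If particle $i_t$ has returned to $o$ by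 time $t$, then $\rho_{t+1}=\rho_t$ and all positions stay the same. Otherwise $\rho_{t+1}(x)=m_x(\rho_t(x))$ for $x=X_t^{(i_t)}$ and $\rho_{t+1}(x)=\rho_t(x)$ otherwise; $X_{t+1}^{(i_t)}$ is the target vertex of $\rho_{t+1}(X_t^{(i_t)})$ and $X_{t+1}^{(i)}=X_t^{(i)}$ for $i\ne i_t$. $I_t(\rho,n)$ is the number of particles $i\in\{0,\dots,n-1\}$ that have not returned to $o$ by time $t$. *)

(* Defs.v *)
From HB Require Import structures.
From mathcomp Require Import all_boot all_order all_algebra.
From mathcomp Require Import classical_sets reals ereal sequences.
Set Implicit Arguments. Unset Strict Implicit. Unset Printing Implicit Defensive.
Import Order.TTheory GRing.Theory Num.Theory.
Local Open Scope ring_scope.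

Section RotorDefs.
Context {R : realType} {V : eqType}.
(* The graph: nbr x = list of neighbours of x (locally finite). *)
Variables (nbr : V -> seq V) (o : V).

Definition deg (x : V) : nat := size (nbr x).

Definition simple_graph : Prop :=
  (forall x, uniq (nbr x)) /\ (forall x, x \notin nbr x) /\
  (forall x y, (y \in nbr x) = (x \in nbr y)).

Definition connected_graph : Prop :=
  forall x y, exists p : seq V, path (fun a b => b \in nbr a) x p /\ last x p = y.

(* srw_p k y = P_o(X_k = y) for simple random walk started at o
   (uses symmetry of nbr: the predecessors of y are its neighbours). *)
Fixpoint srw_p (k : nat) (y : V) : R :=
  match k with
  | 0 => (y == o)%:R
  | k'.+1 => \sum_(x <- nbr y) srw_p k' x / (deg x)%:R
  end.

(* taboo k y = P_o(X_k = y and X_j <> o for all 0 < j < k). *)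
Fixpoint taboo (k : nat) (y : V) : R :=
  match k with
  | 0 => (y == o)%:R
  | k'.+1 => \sum_(x <- nbr y | (k' == 0%N) || (x != o)) taboo k' x / (deg x)%:R
  end.

Definition return_prob : \bar R := (\sum_(1 <= k <oo) (taboo k o)%:E)%E.

Definition transient : Prop := (return_prob < 1)%E.

Definition alphaG : R := 1 - fine return_prob.

(* Green function: expected number of visits to x by SRW from o
   (finite for transient connected graphs). *)
Definition green (x : V) : R := fine (\sum_(0 <= k <oo) (srw_p k x)%:E)%E.

(* Outgoing edge (x,y) is represented by its target y in nbr x.
   A rotor mechanism m : for each x, m x is a bijection of nbr x with one orbit. *)
Definition rotor_mechanism (m : V -> V -> V) : Prop :=
  forall x,
    (forall y, y \in nbr x -> m x y \in nbr x) /\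
    {in nbr x &, injective (m x)} /\
    (forall y z, y \in nbr x -> z \in nbr x -> exists k, iter k (m x) y = z).

Definition rotor_config (rho : V -> V) : Prop := forall x, rho x \in nbr x.

Definition weight (m : V -> V -> V) (x y : V) : R :=
  - (deg x)%:R^-1 *
    \sum_(0 <= i < deg x)
       i%:R * (green (iter i.+1 (m x) y) / (deg (iter i.+1 (m x) y))%:R).

(* The experiment. A history is the list [X_t; X_{t-1}; ...; X_0] of
   particle-position vectors (particle i at X i). *)
Definition returned (h : seq (nat -> V)) (i : nat) : bool :=
  (head (fun _ => o) h i == o) && has (fun X => X i != o) (behead h).

Fixpoint run (m : V -> V -> V) (rho : V -> V) (n : nat) (t : nat)
  : (V -> V) * seq (nat -> V) :=
  match t with
  | 0 => (rho, [:: fun _ => o])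
  | t'.+1 =>
      let (r, h) := run m rho n t' in
      let i := (t'.+1 %% n)%N in
      let X := head (fun _ => o) h in
      if returned h i then (r, X :: h)
      else
        let x := X i in
        let r' := fun z => if z == x then m x (r x) else r z in
        let X' := fun j => if j == i then r' x else X j in
        (r', X' :: h)
  end.

Definition I_t (m : V -> V -> V) (rho : V -> V) (n t : nat) : nat :=
  count (fun i => ~~ returned (run m rho n t).2 i) (iota 0 n).

End RotorDefs.

(* Main.v *)
Require Import Defs.
From HB Require Import structures.
From mathcomp Require Import all_boot all_order all_algebra.
From mathcomp Require Import classical_sets reals ereal sequences.
From mathcomp Require Import boolp topology normedtype.
From mathcomp Require Import lra.
Import Order.TTheory GRing.Theory Num.Theory.
Local Open Scope ring_scope.
Set Implicit Arguments. Unset Strict Implicit. Unset Printing Implicit Defensive.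

Section Basic.
Variables (R : realType) (V : eqType) (nbr : V -> seq V) (o : V).
Local Notation p := (@srw_p R V nbr o).
Local Notation f := (@taboo R V nbr o).

Lemma p_ge0 k y : 0 <= p k y.
Proof.
elim: k y => [|k IH] y /=; first by rewrite ler0n.
by apply: sumr_ge0 => x _; rewrite divr_ge0 ?ler0n.
Qed.

Lemma f_ge0 k y : 0 <= f k y.
Proof.
elim: k y => [|k IH] y /=; first by rewrite ler0n.
by apply: sumr_ge0 => x _; rewrite divr_ge0 ?ler0n.
Qed.

Lemma renewal k y : (0 < k)%N ->
  p k y = f k y + \sum_(1 <= j < k) f j o * p (k - j) y.
Proof.
case: k => // k _; elim: k y => [|k IH] y.
  rewrite big_geq // addr0 /=; by apply: eq_bigl => x.
have -> : p k.+2 y = \sum_(x <- nbr y) p k.+1 x / (deg nbr x)%:R by [].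
have -> : f k.+2 y = \sum_(x <- nbr y | x != o) f k.+1 x / (deg nbr x)%:R by [].
under eq_bigr => x _ do rewrite IH // mulrDl.
rewrite big_split.
set F := f k.+1. rewrite (bigID (fun x => x != o)) /= -addrA; congr (_ + _).
rewrite big_nat_recr // subSnn.
have -> : p 1 y = \sum_(x <- nbr y) (x == o)%:R / (deg nbr x)%:R by [].
rewrite addrC; congr (_ + _); last first.
  rewrite mulr_sumr big_mkcond; apply: eq_bigr => x _.
  rewrite negbK; case: (eqVneq x o) => [->|_]; first by rewrite mul1r.
  by rewrite mul0r mulr0.
under eq_bigr => x _ do rewrite mulr_suml.
rewrite exchange_big; rewrite !big_nat; apply: eq_bigr => j /andP[j1 jk].
rewrite (subSn (ltnW jk)).
have : (0 < k.+1 - j)%N by rewrite subn_gt0.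
case: (k.+1 - j)%N => // l _.
have -> : p l.+2 y = \sum_(x <- nbr y) p l.+1 x / (deg nbr x)%:R by [].
by rewrite mulr_sumr; apply: eq_bigr => x _; rewrite mulrA.
Qed.


Definition aa j := if j is 0 then 0 else f j o.

Lemma aa_ge0 j : 0 <= aa j.
Proof. by case: j => [|j]; [exact: lexx | exact: f_ge0]. Qed.

Lemma p_o_conv k : p k o = (k == 0)%:R + \sum_(j < k.+1) aa j * p (k - j) o.
Proof.
case: k => [|k]; first by rewrite big_ord_recl big_ord0 /= mul0r !addr0 eqxx.
rewrite renewal // add0r big_ord_recr /= subnn.
have -> : p 0 o = 1 by rewrite /= eqxx.
rewrite mulr1 addrC; congr (_ + _).
rewrite big_ord_recl /= mul0r add0r (big_addn 0 _ 1) /= subn1 /= big_mkord.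
by apply: eq_bigr => i _; rewrite addn1.
Qed.

Lemma conv_sum (a b : nat -> R) N :
  \sum_(k < N) \sum_(j < k.+1) a j * b (k - j)%N =
  \sum_(j < N) a j * \sum_(l < N - j) b l.
Proof.
elim: N => [|N IH]; first by rewrite !big_ord0.
rewrite big_ord_recr /= IH [RHS]big_ord_recr /= subSnn big_ord1.
rewrite [in LHS]big_ord_recr /= subnn addrA; congr (_ + _).
have E : forall j : 'I_N, \sum_(l < N.+1 - j) b l = \sum_(l < N - j) b l + b (N - j)%N.
  move=> j; rewrite subSn; last exact: ltnW.
  by rewrite big_ord_recr.
under [in RHS]eq_bigr => j _ do rewrite E mulrDr.
by rewrite big_split.
Qed.


Lemma psum_mono (b : nat -> R) M N : (forall l, 0 <= b l) -> (M <= N)%N ->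
  \sum_(l < M) b l <= \sum_(l < N) b l.
Proof.
move=> b0 MN; rewrite -!(big_mkord xpredT) (@big_cat_nat _ _ _ M 0 N _ _ (leq0n M) MN) /=.
by rewrite lerDl sumr_ge0.
Qed.

Lemma ser_bound (u : nat -> R) (B : R) : (forall k, 0 <= u k) ->
  (forall N, \sum_(k < N) u k <= B) ->
  (\sum_(0 <= k <oo) (u k)%:E <= B%:E)%E.
Proof.
move=> u0 uB; apply: lime_le.
  by apply: is_cvg_nneseries => n _ _; rewrite lee_fin.
by apply: nearW => N; rewrite sumEFin lee_fin big_mkord.
Qed.

Lemma ser_ge0 (u : nat -> R) : (forall k, 0 <= u k) ->
  (0 <= \sum_(0 <= k <oo) (u k)%:E)%E.
Proof. by move=> u0; apply: nneseries_ge0 => n _ _; rewrite lee_fin. Qed.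

Lemma ser_fin (u : nat -> R) (B : R) : (forall k, 0 <= u k) ->
  (forall N, \sum_(k < N) u k <= B) ->
  (\sum_(0 <= k <oo) (u k)%:E)%E \is a fin_num.
Proof.
move=> u0 uB; rewrite ge0_fin_numE ?ser_ge0 //.
exact: (le_lt_trans (ser_bound u0 uB) (ltry _)).
Qed.

Lemma ser_ge_partial (u : nat -> R) N : (forall k, 0 <= u k) ->
  ((\sum_(k < N) u k)%:E <= \sum_(0 <= k <oo) (u k)%:E)%E.
Proof.
move=> u0; rewrite -sumEFin.
have := @nneseries_lim_ge R (fun k => (u k)%:E) xpredT 0 N.
by rewrite big_mkord; apply => n _ _; rewrite lee_fin.
Qed.


Hypothesis tr : @transient R V nbr o.
Local Notation rp := (@return_prob R V nbr o).
Local Notation FF := (fine rp).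

Lemma rp_ge0 : (0 <= rp)%E.
Proof. by apply: nneseries_ge0 => k _ _; rewrite lee_fin f_ge0. Qed.

Lemma rp_fin : rp \is a fin_num.
Proof. by rewrite ge0_fin_numE ?rp_ge0 // (lt_trans tr) // ltry. Qed.

Lemma FF_ge0 : 0 <= FF.
Proof. by rewrite fine_ge0 // rp_ge0. Qed.

Lemma FF_lt1 : FF < 1.
Proof. by rewrite -lte_fin fineK ?rp_fin. Qed.

Lemma aa_sum N : \sum_(j < N) aa j <= FF.
Proof.
have -> : \sum_(j < N) aa j = \sum_(1 <= j < N) f j o.
  case: N => [|N]; first by rewrite big_ord0 big_geq.
  rewrite big_ord_recl /= add0r (big_addn 0 _ 1) /= subn1 /= big_mkord.
  by apply: eq_bigr => i _; rewrite addn1.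
rewrite -lee_fin fineK ?rp_fin // -sumEFin.
by apply: nneseries_lim_ge => n _ _; rewrite lee_fin f_ge0.
Qed.

Lemma S_bound N : \sum_(k < N) p k o <= (1 - FF)^-1.
Proof.
have hF : 0 < 1 - FF by rewrite subr_gt0 FF_lt1.
rewrite -[_^-1]mul1r ler_pdivlMr //.
set S := \sum_(k < N) p k o.
have : S <= 1 + FF * S.
  rewrite {1}/S.
  under eq_bigr => k _ do rewrite p_o_conv.
  rewrite big_split /= (conv_sum aa (fun l => p l o)); apply: lerD.
    case: N {S} => [|N]; first by rewrite big_ord0 ler01.
    rewrite big_ord_recl /= big1 ?addr0 // => i _.
  have h1 : \sum_(j < N) aa j * \sum_(l < N - j) p l o <= \sum_(j < N) aa j * S.
    apply: ler_sum => j _; apply: ler_wpM2l; first exact: aa_ge0.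
    apply: (psum_mono (b := fun l => p l o)); [move=> l; exact: p_ge0 | exact: leq_subr].
  apply: le_trans h1 _.
  rewrite -mulr_suml; apply: ler_wpM2r; last exact: aa_sum.
  by apply: sumr_ge0 => k _; exact: p_ge0.
by move=> h; nra.
Qed.


Lemma sum_ge_mem (s : seq V) (F : V -> R) a : a \in s -> (forall x, 0 <= F x) ->
  F a <= \sum_(x <- s) F x.
Proof.
move=> As F0; rewrite (big_rem a) //= lerDl.
by apply: sumr_ge0 => x _.
Qed.

Lemma step_ge a b k : a \in nbr b -> p k a / (deg nbr a)%:R <= p k.+1 b.
Proof.
move=> ab; have -> : p k.+1 b = \sum_(x <- nbr b) p k x / (deg nbr x)%:R by [].
apply: (sum_ge_mem (F := fun x => p k x / (deg nbr x)%:R)) => // x.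
by rewrite divr_ge0 ?p_ge0 ?ler0n.
Qed.

Hypothesis simple : simple_graph nbr.
Hypothesis conn : connected_graph nbr.

Lemma path_ge q x : path (fun a b => b \in nbr a) x q ->
  exists c, 0 < c /\ forall k, c * p k x <= p (k + size q) (last x q).
Proof.
elim: q x => [|y q IH] x /=.
  by move=> _; exists 1; split => // k; rewrite mul1r addn0.
case/andP => yx /IH [c [c0 hc]].
have dx : (0 < deg nbr x)%N by rewrite /deg; case: (nbr x) yx.
exists (c / (deg nbr x)%:R); split; first by rewrite divr_gt0 // ltr0n.
move=> k; rewrite -addSnnS; apply: (le_trans _ (hc k.+1)); rewrite -mulrA ler_wpM2l //.
  exact: ltW.
rewrite mulrC.
apply: step_ge; case: simple => _ [_ sym]; by rewrite -sym.
Qed.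

Lemma reach x : exists j c, 0 < c /\ forall k, c * p k x <= p (k + j) o.
Proof.
case: (conn x o) => q [pq lq]; case: (path_ge pq) => c [c0 hc].
by rewrite lq in hc; exists (size q), c.
Qed.

Lemma psum_bound x : exists B, forall N, \sum_(k < N) p k x <= B.
Proof.
case: (reach x) => j [c [c0 hc]].
exists (c^-1 * (1 - FF)^-1) => N.
rewrite -(ler_pM2l c0) mulrA mulfV ?gt_eqF // mul1r mulr_sumr.
apply: le_trans (S_bound (j + N)).
rewrite big_split_ord /= -[X in X <= _]add0r lerD //.
  by apply: sumr_ge0 => k _; exact: p_ge0.
by apply: ler_sum => k _; rewrite addnC; exact: hc.
Qed.

Lemma green_E x : (@green R V nbr o x)%:E = (\sum_(0 <= k <oo) (p k x)%:E)%E.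
Proof.
case: (psum_bound x) => B hB; rewrite fineK //.
by apply: (ser_fin (B := B)) => // k; exact: p_ge0.
Qed.

Lemma green_ge0 x : 0 <= @green R V nbr o x.
Proof. by rewrite -lee_fin green_E ser_ge0 // => k; exact: p_ge0. Qed.

Lemma green_o_bound : @green R V nbr o o <= (1 - FF)^-1.
Proof.
rewrite -lee_fin green_E; apply: ser_bound => [k|N]; [exact: p_ge0|exact: S_bound].
Qed.

Lemma green_o_ge1 : 1 <= @green R V nbr o o.
Proof.
rewrite -lee_fin green_E; apply: le_trans (ser_ge_partial 1 (@p_ge0 ^~ o)).
by rewrite big_ord1 /= eqxx.
Qed.

Lemma green_harm x : @green R V nbr o x =
  (x == o)%:R + \sum_(y <- nbr x) @green R V nbr o y / (deg nbr y)%:R.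
Proof.
apply: EFin_inj; rewrite green_E EFinD nneseries_recl //; last first.
  by move=> k _; rewrite lee_fin p_ge0.
congr (_ + _)%E.
rewrite -nneseries_addn; last by move=> k; rewrite lee_fin p_ge0.
under eq_eseriesr => k _ do rewrite addn1 /= -sumEFin.
rewrite nneseries_sum; last by move=> y k _; rewrite lee_fin divr_ge0 ?p_ge0 ?ler0n.
rewrite -sumEFin; apply: eq_bigr => y _.
under eq_eseriesr => k _ do rewrite mulrC EFinM.
rewrite nneseriesZl; last by move=> k _; rewrite lee_fin p_ge0.
by rewrite -green_E -EFinM mulrC.
Qed.

End Basic.
Section Orbit.
Variables (V : eqType) (s : seq V) (g : V -> V).
Hypothesis us : uniq s.
Hypothesis gs : forall y, y \in s -> g y \in s.
Hypothesis ginj : {in s &, injective g}.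
Hypothesis gtr : forall y z, y \in s -> z \in s -> exists k, iter k g y = z.

Lemma iter_in k y : y \in s -> iter k g y \in s.
Proof. by move=> ys; elim: k => [|k IH] //=; apply: gs. Qed.

Lemma iter_cancel a b y : y \in s -> iter (a + b) g y = iter b g y -> iter a g y = y.
Proof.
move=> ys; elim: b => [|b IH]; first by rewrite addn0.
rewrite addnS /= => E; apply: IH; apply: ginj => //; exact: iter_in.
Qed.

Lemma iter_mul a q y : iter a g y = y -> iter (q * a) g y = y.
Proof.
move=> E; elim: q => [|q IH]; first by rewrite mul0n.
by rewrite mulSn iterD IH E.
Qed.

Lemma period_ge a y : y \in s -> (0 < a)%N -> iter a g y = y -> (size s <= a)%N.
Proof.
move=> ys a0 E.
have sub : {subset s <= [seq iter r g y | r <- iota 0 a]}.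
  move=> z zs; case: (gtr ys zs) => k <-.
  apply/mapP; exists (k %% a)%N; first by rewrite mem_iota add0n ltn_pmod.
  by rewrite {1}(divn_eq k a) addnC iterD iter_mul.
by have := uniq_leq_size us sub; rewrite size_map size_iota.
Qed.

Lemma orbit_uniq y : y \in s -> uniq [seq iter i g y | i <- iota 0 (size s)].
Proof.
move=> ys; rewrite map_inj_in_uniq ?iota_uniq //.
have key : forall i j, (i < j)%N -> (j < size s)%N -> iter i g y = iter j g y -> False.
  move=> i j ij js E.
  have E' : iter ((j - i) + i) g y = iter i g y by rewrite subnK ?(ltnW ij).
  have := period_ge ys _ (iter_cancel ys E'); rewrite subn_gt0 ij => /(_ isT).
  move=> h; have : (j - i < size s)%N by apply: leq_ltn_trans js; exact: leq_subr.
  by rewrite ltnNge h.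
move=> i j; rewrite !mem_iota !add0n => /andP[_ iS] /andP[_ js] E.
case: (ltngtP i j) => // [ij|ji]; first by case: (key _ _ ij js E).
by case: (key _ _ ji iS (esym E)).
Qed.

Lemma orbit_perm y : y \in s -> perm_eq [seq iter i g y | i <- iota 0 (size s)] s.
Proof.
move=> ys; apply: uniq_perm; [exact: orbit_uniq | exact: us |].
have sub : {subset [seq iter i g y | i <- iota 0 (size s)] <= s}.
  by move=> z /mapP [i _ ->]; exact: iter_in.
have [|_ H] := uniq_min_size (orbit_uniq ys) sub; last exact: H.
by rewrite size_map size_iota.
Qed.

Lemma iter_size y : y \in s -> iter (size s) g y = y.
Proof.
move=> ys; have := iter_in (size s) ys.
rewrite -(perm_mem (orbit_perm ys)) => /mapP [i]; rewrite mem_iota add0n => /andP[_ iS] E.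
case: i iS E => [//|i] iS E.
have E' : iter ((size s - i.+1) + i.+1) g y = iter i.+1 g y by rewrite subnK ?(ltnW iS).
have := period_ge ys _ (iter_cancel ys E'); rewrite subn_gt0 iS => /(_ isT).
have : (size s - i.+1 < size s)%N by rewrite ltn_subrL (leq_ltn_trans _ iS).
by rewrite ltnNge => /negbTE ->.
Qed.

Variable R : realType.

Lemma sum_orbit (h : V -> R) y : y \in s ->
  \sum_(0 <= i < size s) h (iter i.+1 g y) = \sum_(z <- s) h z.
Proof.
move=> ys.
have E : \sum_(0 <= i < (size s).+1) h (iter i g y) =
         \sum_(0 <= i < (size s).+1) h (iter i g y) by [].
rewrite {1}big_nat_recl // big_nat_recr //= iter_size // [RHS]addrC in E.
move/addrI: E => E.
change (\sum_(0 <= i < size s) h (g (iter i g y)) = \sum_(z <- s) h z).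
rewrite E -(perm_big _ (orbit_perm ys)) big_map /index_iota subn0.
by []. Qed.

Lemma alg_id (a : nat -> R) d :
  \sum_(0 <= i < d) i%:R * a i.+2 - \sum_(0 <= i < d) i%:R * a i.+1 =
  d%:R * a d.+1 - \sum_(0 <= i < d) a i.+2.
Proof.
elim: d => [|d IH]; first by rewrite !big_geq // mul0r subrr.
rewrite !big_nat_recr //= -natr1.
lra.
Qed.

Lemma weight_step (h : V -> R) y : y \in s ->
  let W := fun y => - ((size s)%:R)^-1 *
      \sum_(0 <= i < size s) i%:R * h (iter i.+1 g y) in
  W (g y) - W y = - h (g y) + ((size s)%:R)^-1 * \sum_(z <- s) h z.
Proof.
move=> ys W; rewrite /W.
have d0 : (0 < size s)%N by case: (s) ys.
have E := alg_id (fun k => h (iter k g y)) (size s).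
under eq_bigr => i _ do rewrite -iterSr.
rewrite -mulrBr E -(sum_orbit h (gs ys)).
under eq_bigr => i _ do rewrite iterSr.
have -> : h (iter (size s).+1 g y) = h (g y) by rewrite iterSr iter_size ?gs.
rewrite mulNr mulrBr mulrA mulVf; last by rewrite pnatr_eq0 -lt0n.
by rewrite mul1r opprB addrC.
Qed.

End Orbit.


Lemma sum_update (T : eqType) (R : realType) (s : seq T) (F F' : T -> R) a :
  uniq s -> a \in s -> (forall j, j != a -> F' j = F j) ->
  \sum_(j <- s) F' j = \sum_(j <- s) F j + (F' a - F a).
Proof.
move=> us aS E; rewrite [in LHS](big_rem a) // [in RHS](big_rem a) //=.
have -> : \sum_(j <- rem a s) F' j = \sum_(j <- rem a s) F j.
  rewrite !big_seq; apply: eq_bigr => j; rewrite (mem_rem_uniq _ us) => /andP[ja _].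
  exact: E.
by lra.
Qed.

Section Run.
Variables (R : realType) (V : eqType) (nbr : V -> seq V) (o : V).
Variables (m : V -> V -> V) (rho : V -> V) (n : nat).
Hypothesis mech : rotor_mechanism nbr m.
Hypothesis conf : rotor_config nbr rho.
Hypothesis n1 : (1 <= n)%N.

Local Notation st t := (run o m rho n t).
Local Notation rr t := (st t).1.
Local Notation hist t := (st t).2.
Local Notation X t := (head (fun _ => o) (hist t)).
Local Notation it s := (s.+1 %% n)%N.
Definition act s := ~~ returned o (hist s) (it s).
Definition mv s := X s (it s).

Lemma run_S t : st t.+1 =
  if returned o (hist t) (it t) then (rr t, X t :: hist t)
  else let x := X t (it t) in
       let r' := fun z => if z == x then m x (rr t x) else rr t z in
       (r', (fun j => if j == it t then r' x else X t j) :: hist t).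
Proof. by rewrite /=; case: (run o m rho n t). Qed.

Lemma rr_S t : rr t.+1 =
  if act t then (fun z => if z == mv t then m (mv t) (rr t (mv t)) else rr t z)
  else rr t.
Proof. by rewrite run_S /act /mv; case: ifP. Qed.

Lemma X_S t : X t.+1 =
  if act t then (fun j => if j == it t then m (mv t) (rr t (mv t)) else X t j)
  else X t.
Proof. by rewrite run_S /act /mv; case: ifP => //= _; rewrite eqxx. Qed.

Lemma hist_S t : hist t.+1 = X t.+1 :: hist t.
Proof. by rewrite run_S; case: ifP. Qed.

Lemma config_inv t z : rr t z \in nbr z.
Proof.
elim: t z => [|t IH] z; first exact: conf.
rewrite rr_S; case: ifP => // _; case: eqP => [->|_] //.
by case: (mech (mv t)) => h _; apply: h; exact: IH.
Qed.

Lemma it_lt s : (it s < n)%N.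
Proof. by rewrite ltn_pmod. Qed.

Lemma early s : (s < n)%N -> forall j, ~~ (0 < j <= s)%N ->
  all (fun Y => Y j == o) (hist s).
Proof.
elim: s => [|s IH] sn j hj; first by rewrite /= eqxx.
have sn' : (s < n)%N by apply: ltnW.
have hj' : ~~ (0 < j <= s)%N.
  by apply: contra hj => /andP[-> /leqW].
rewrite hist_S /= IH // andbT X_S.
have hd : X s j == o.
  by move: (IH sn' j hj'); case: (hist s) => //= Y l /andP[].
case: ifP => // _; case: (eqVneq j (it s)) => [ji|nji] //.
by move: hj; rewrite ji modn_small // leqnn andbT.
Qed.

Lemma early_act s : (s < n)%N -> act s /\ mv s = o.
Proof.
move=> sn.
have hj : ~~ (0 < it s <= s)%N.
  case: (ltnP s.+1 n) => h; first by rewrite modn_small // ltnn andbF.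
  have -> : s.+1 = n by apply/eqP; rewrite eqn_leq h sn.
  by rewrite modnn.
have A := early sn hj.
have hd : X s (it s) == o by move: A; case: (hist s) => //= Y l /andP[].
split; last exact/eqP.
rewrite /act /returned negb_and; apply/orP; right.
apply/negP => /hasP [Y /mem_behead YA] /negP; apply.
by move/allP: A => /(_ Y YA).
Qed.


Hypothesis simple : simple_graph nbr.
Hypothesis conn : connected_graph nbr.
Hypothesis tr : @transient R V nbr o.

Definition hh z := @green R V nbr o z / (deg nbr z)%:R.
Local Notation W := (@weight R V nbr o m).
Definition Phi S t := \sum_(j <- iota 0 n) hh (X t j) +
  \sum_(z <- S) (W z (rr t z) - W z (rho z)).

Lemma hh_ge0 z : 0 <= hh z.
Proof. by rewrite /hh divr_ge0 ?ler0n // green_ge0. Qed.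

Lemma step_delta t : let x := mv t in let y1 := m x (rr t x) in
  hh y1 - hh x + (W x y1 - W x (rr t x)) = - (x == o)%:R / (deg nbr x)%:R.
Proof.
move=> x y1.
have yx := config_inv t x.
case: (mech x) => gs [ginj gtr].
have us : uniq (nbr x) by case: simple.
have E : W x y1 - W x (rr t x) =
   - hh y1 + ((size (nbr x))%:R)^-1 * \sum_(z <- nbr x) hh z :=
  weight_step us gs ginj gtr hh yx.
rewrite E /hh (green_harm tr simple conn x).
have d0 : (deg nbr x)%:R != 0 :> R.
  by rewrite pnatr_eq0 /deg; case: (nbr x) yx.
rewrite -/(deg nbr x) mulrDl.
set Sg := \sum_(z <- nbr x) _.
have -> : Sg / (deg nbr x)%:R = (deg nbr x)%:R^-1 * Sg by rewrite mulrC.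
lra.
Qed.

Lemma sum_const_iota a k (c : R) : \sum_(j <- iota a k) c = k%:R * c.
Proof.
elim: k a => [|k IH] a; first by rewrite big_nil mul0r.
by rewrite /= big_cons IH -natr1 mulrDl mul1r addrC.
Qed.

Lemma pot t S : uniq S -> (forall s, (s < t)%N -> act s -> mv s \in S) ->
  Phi S t <= n%:R * hh o - (minn t n)%:R / (deg nbr o)%:R.
Proof.
move=> uS; elim: t => [|t IH] hS.
  rewrite /Phi /= sum_const_iota big1 ?addr0 => [|z _]; last by rewrite subrr.
  by rewrite min0n mul0r subr0.
have IH' := IH (fun s st => hS s (ltnW st)).
have Ephi : Phi S t.+1 = Phi S t + (if act t then - (mv t == o)%:R / (deg nbr (mv t))%:R else 0).
  rewrite /Phi; case A : (act t).
    have := step_delta t; rewrite /= => <-.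
    rewrite (sum_update (F := fun j => hh (X t j)) (a := it t) (iota_uniq 0 n)); last first.
    - by move=> j nj; rewrite X_S A (negbTE nj).
    - by rewrite mem_iota add0n it_lt.
    rewrite (sum_update (F := fun z => W z (rr t z) - W z (rho z)) (a := mv t) uS); last first.
    - by move=> z nz; rewrite rr_S A (negbTE nz).
    - by apply: hS.
    rewrite X_S rr_S A /= !eqxx; lra.
  by rewrite X_S rr_S A addr0.
rewrite Ephi.
case: (ltnP t n) => tn.
  have [A Mo] := early_act tn.
  rewrite A Mo eqxx.
  have -> : minn t.+1 n = (minn t n).+1 by rewrite (elimT minn_idPl tn) (elimT minn_idPl (ltnW tn)).
  move: IH'; rewrite -natr1 mulrDl mul1r /= mulr1n mulNr mul1r; lra.
have -> : minn t.+1 n = minn t n by rewrite (elimT minn_idPr tn) (elimT minn_idPr (leqW tn)).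
case: (act t) => //; last by rewrite addr0.
rewrite mulNr.
have : 0 <= (mv t == o)%:R / (deg nbr (mv t))%:R :> R by rewrite divr_ge0 ?ler0n.
move: IH'; lra.
Qed.


Lemma count_hh t (s : seq nat) :
  (count (returned o (hist t)) s)%:R * hh o <= \sum_(j <- s) hh (X t j).
Proof.
elim: s => [|j s IH]; first by rewrite big_nil mul0r.
rewrite big_cons /= natrD mulrDl lerD //.
case E : (returned o (hist t) j); last by rewrite mul0r hh_ge0.
by move: E; rewrite /returned => /andP[/eqP -> _]; rewrite mul1r.
Qed.

Lemma main_in t :
  (forall x y, y \in nbr x -> W x (rho x) <= W x y) -> (n <= t)%N ->
  @alphaG R V nbr o <= (I_t o m rho n t)%:R / n%:R.
Proof.
move=> hmin tn.
set S := undup [seq mv s | s <- iota 0 t].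
have hS : forall s, (s < t)%N -> act s -> mv s \in S.
  by move=> s st _; rewrite mem_undup; apply: map_f; rewrite mem_iota.
have hP := pot (undup_uniq _) hS.
rewrite /Phi (elimT minn_idPr tn) -/S in hP.
have h2 : 0 <= \sum_(z <- S) (W z (rr t z) - W z (rho z)).
  by apply: sumr_ge0 => z _; rewrite subr_ge0; apply: hmin; exact: config_inv.
have h3 := count_hh t (iota 0 n).
have h4 := count_predC (returned o (hist t)) (iota 0 n).
rewrite size_iota in h4.
set Rc := count _ _ in h3 h4.
have -> : I_t o m rho n t = count (predC (returned o (hist t))) (iota 0 n) by [].
set Ic := count (predC _) _ in h4 *.
have eRI : n%:R = Rc%:R + Ic%:R :> R by rewrite -natrD h4.
set G := @green R V nbr o o.
have G1 : 1 <= G := green_o_ge1 tr simple conn.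
have GF : G <= (1 - fine (@return_prob R V nbr o))^-1 := green_o_bound tr simple conn.
have F0 : 0 <= fine (@return_prob R V nbr o) by apply: FF_ge0.
have F1 : fine (@return_prob R V nbr o) < 1 by apply: FF_lt1.
rewrite /alphaG; set FF := fine _ in GF F0 F1 *.
have d0 : (0 < deg nbr o)%N by rewrite /deg; have := conf o; case: (nbr o).
set e := ((deg nbr o)%:R : R)^-1.
have e0 : 0 < e by rewrite invr_gt0 ltr0n.
have hho : hh o = G * e by [].
rewrite hho in hP h3.
have f1 : n%:R <= Ic%:R * G.
  have : 0 <= (Ic%:R * G - n%:R) * e.
    move: hP h2 h3; rewrite eRI -/e; lra.
  by rewrite pmulr_lge0 // subr_ge0.
have f2 : (1 - FF) * G <= 1.
  by rewrite -(ler_pM2l (x := (1 - FF)^-1)) ?invr_gt0 ?subr_gt0 // mulrA mulVf ?mulr1 ?mul1r // subr_eq0 eq_sym lt_eqF.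
have n0 : 0 < n%:R :> R by rewrite ltr0n.
rewrite ler_pdivlMr //.
have Ic0 : 0 <= Ic%:R :> R by rewrite ler0n.
have a0 : 0 <= 1 - FF by rewrite subr_ge0 ltW.
have g1 : (1 - FF) * n%:R <= (1 - FF) * (Ic%:R * G) by rewrite ler_wpM2l.
have g2 : Ic%:R * ((1 - FF) * G) <= Ic%:R * 1 by rewrite ler_wpM2l.
nra.
Qed.

End Run.

Theorem proposition2p2 (R : realType) (V : eqType) (nbr : V -> seq V) (o : V)
  (m : V -> V -> V) (rho_min : V -> V) (n t : nat) :
  simple_graph nbr ->
  connected_graph nbr ->
  @transient R V nbr o ->
  rotor_mechanism nbr m ->
  rotor_config nbr rho_min ->
  (forall x y, y \in nbr x ->
     @weight R V nbr o m x (rho_min x) <= @weight R V nbr o m x y) ->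
  (1 <= n)%N -> (n <= t)%N ->
  @alphaG R V nbr o <= (I_t o m rho_min n t)%:R / n%:R.
Proof.
move=> simple conn tr mech conf hmin n1 tn.
exact: (main_in mech conf n1 simple conn tr hmin tn).
Qed.
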